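(* Bob can win the $2$-Expanded Coloring Game on an uncolored $P_4^+$, where $P_4^+$ is the tree with vertices $x_1,x_2,x_3,x_4,x_3'$ and edges $x_1x_2,\ x_2x_3,\ x_3x_4,\ x_3x_3'$.
   Context: A color is legal for an uncolored vertex $v$ if no neighbor of $v$ has that color. The $k$-coloring game on a (partially colored) graph: Alice and Bob alternate turns, Alice first, each coloring an uncolored vertex with a legal color from a set of $k$ colors; Bob wins if at some point an uncolored vertex has no legal color, Alice wins if all vertices become colored. The $k$-Expanded Coloring Game ($k$-ECG) on a partially colored forest is the same as the $k$-coloring game except that on her turn Alice may choose not to color a vertex, and if she does not color a vertex she may instead add to the forest a single new colored leaf (a new vertex joined to exactly one existing vertex, colored with one of the $k$ colors). *)

(* Defs.v *)
From mathcomp Require Import all_boot.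
Set Implicit Arguments. Unset Strict Implicit. Unset Printing Implicit Defensive.

(* A position of the k-Expanded Coloring Game: a (partially colored) graph
   with vertices 0 .. nv-1, an (undirected) edge list, and a partial
   coloring; colors are the naturals c < k. *)
Record ecg_state := ECGState {
  nv : nat;
  edges : seq (nat * nat);
  col : nat -> option nat
}.

Definition adj (s : ecg_state) (u v : nat) : Prop :=
  (u, v) \in edges s \/ (v, u) \in edges s.

Definition legal (k : nat) (s : ecg_state) (v c : nat) : Prop :=
  v < nv s /\ col s v = None /\ c < k /\
  (forall u, u < nv s -> adj s u v -> col s u <> Some c).

Definition stuck (k : nat) (s : ecg_state) : Prop :=
  exists v, v < nv s /\ col s v = None /\ (forall c, c < k -> ~ legal k s v c).

Definition all_colored (s : ecg_state) : Prop :=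
  forall v, v < nv s -> col s v <> None.

Definition color_vertex (s : ecg_state) (v c : nat) : ecg_state :=
  ECGState (nv s) (edges s) (fun w => if w == v then Some c else col s w).

Definition add_leaf (s : ecg_state) (u c : nat) : ecg_state :=
  ECGState (nv s).+1 ((nv s, u) :: edges s)
           (fun w => if w == nv s then Some c else col s w).

Inductive alice_move (k : nat) (s : ecg_state) : ecg_state -> Prop :=
| AM_color v c : legal k s v c -> alice_move k s (color_vertex s v c)
| AM_leaf u c : u < nv s -> c < k -> alice_move k s (add_leaf s u c)
| AM_pass : alice_move k s s.

Inductive bob_move (k : nat) (s : ecg_state) : ecg_state -> Prop :=
| BM_color v c : legal k s v c -> bob_move k s (color_vertex s v c).

(* bob_wins_A k s : Bob has a winning strategy from s with Alice to move;
   bob_wins_B k s : same with Bob to move.  (The game always terminates,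
   since Bob colors a vertex each turn and Alice never creates uncolored
   vertices, so an inductive (finite-play) winning strategy is the right
   notion.) *)
Inductive bob_wins_A (k : nat) : ecg_state -> Prop :=
| BWA_stuck s : stuck k s -> bob_wins_A k s
| BWA_move s : ~ all_colored s ->
    (forall s', alice_move k s s' -> bob_wins_B k s') -> bob_wins_A k s
with bob_wins_B (k : nat) : ecg_state -> Prop :=
| BWB_stuck s : stuck k s -> bob_wins_B k s
| BWB_move s s' : ~ all_colored s -> bob_move k s s' -> bob_wins_A k s' ->
    bob_wins_B k s.

Definition bob_wins_ECG (k : nat) (s : ecg_state) : Prop := bob_wins_A k s.

(* The uncolored P_4^+ : x1 = 0, x2 = 1, x3 = 2, x4 = 3, x3' = 4. *)
Definition P4plus : ecg_state :=
  ECGState 5 [:: (0, 1); (1, 2); (2, 3); (2, 4)] (fun _ => None).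

(* Main.v *)
Require Import Defs.
From mathcomp Require Import all_boot.
From Stdlib Require Import Setoid.
Set Implicit Arguments. Unset Strict Implicit. Unset Printing Implicit Defensive.

Record astate := AS { acol : nat -> option nat; aforb : nat -> nat -> bool }.

Definition tree : seq (nat * nat) := [:: (0, 1); (1, 2); (2, 3); (2, 4)].
Definition tadj (u v : nat) : bool := ((u, v) \in tree) || ((v, u) \in tree).

Definition alegal (a : astate) v c : bool :=
  (acol a v == None) && ~~ aforb a v c &&
  all (fun u => tadj u v ==> (acol a u != Some c)) (iota 0 5).

Definition astuck a : bool :=
  has (fun v => (acol a v == None) && ~~ alegal a v 0 && ~~ alegal a v 1) (iota 0 5).

Definition aallc a : bool := all (fun v => acol a v != None) (iota 0 5).

Definition aset a v c : astate :=
  AS (fun w => if w == v then Some c else acol a w) (aforb a).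
Definition aforbset a v c : astate :=
  AS (acol a) (fun w d => if (w == v) && (d == c) then true else aforb a w d).

Definition amoves a : seq astate :=
  a :: flatten [seq [seq aforbset a v c | c <- iota 0 2] ++
                    [seq aset a v c | c <- iota 0 2 & alegal a v c] | v <- iota 0 5].

Fixpoint lall (p : astate -> bool) (s : seq astate) : bool :=
  match s with [::] => true | x :: s' => if p x then lall p s' else false end.
Fixpoint lhas (p : nat * nat -> bool) (s : seq (nat * nat)) : bool :=
  match s with [::] => false | x :: s' => if p x then true else lhas p s' end.
Lemma lallE p s : lall p s = all p s.
Proof. by elim: s => //= x s ->; case: (p x). Qed.
Lemma lhasE p s : lhas p s = has p s.
Proof. by elim: s => //= x s ->; case: (p x). Qed.

Definition bpairs : seq (nat * nat) := [seq (v, c) | v <- iota 0 5, c <- iota 0 2].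

Definition bstep (f : astate -> bool) (a' : astate) : bool :=
  if astuck a' then true else if aallc a' then false else
  lhas (fun vc => if alegal a' vc.1 vc.2 then f (aset a' vc.1 vc.2) else false) bpairs.

Fixpoint awinA (n : nat) (a : astate) : bool :=
  match n with
  | 0 => false
  | n'.+1 => if astuck a then true else if aallc a then false
             else lall (bstep (awinA n')) (amoves a)
  end.

Lemma awinA_S n a : awinA n.+1 a = astuck a || (~~ aallc a && all (bstep (awinA n)) (amoves a)).
Proof. by rewrite /= lallE; case: astuck; case: aallc. Qed.

Record models (a : astate) (s : ecg_state) : Prop := {
  m_nv : 5 <= nv s;
  m_tree : forall e, e \in tree -> e \in edges s;
  m_edges : forall x y, (x, y) \in edges s ->
     [/\ x < nv s, y < nv s & (x < 5 -> y < 5 -> (x, y) \in tree)];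
  m_leafcol : forall u, 5 <= u -> u < nv s -> col s u <> None;
  m_col : forall v, v < 5 -> col s v = acol a v;
  m_forb : forall v c, v < 5 ->
     (aforb a v c <-> exists u, [/\ 5 <= u, u < nv s, adj s u v & col s u = Some c])
}.

Lemma legal_small a s v c : models a s -> legal 2 s v c -> v < 5.
Proof.
move=> M [Hv [Hc _]]; case: (ltnP v 5) => // H5.
by case: (m_leafcol M H5 Hv).
Qed.

Lemma legal_iff a s v c : models a s -> v < 5 ->
  (legal 2 s v c <-> (c < 2) && alegal a v c).
Proof.
move=> M Hv; split.
- move=> [Hvn [Hcol [Hc Hadj]]]; rewrite Hc /alegal -(m_col M Hv) Hcol eqxx !andTb.
  apply/andP; split.
  + apply/negP => /(m_forb M c Hv) [u [H1 H2 H3 H4]]; exact: (Hadj u H2 H3 H4).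
  + apply/allP => u; rewrite mem_iota add0n => /andP [_ Hu]; apply/implyP => Ht.
    rewrite -(m_col M Hu); apply/eqP; apply: Hadj; first by apply: leq_trans Hu (m_nv M).
    by case/orP: Ht => Ht; [left|right]; apply: (m_tree M).
- case/andP => Hc /andP [/andP [/eqP Hcol Hf] /allP Hall].
  split; first by apply: leq_trans Hv (m_nv M).
  split; first by rewrite (m_col M Hv).
  split=> // u Hu Hadj.
  case: (ltnP u 5) => Hu5.
  + have Ht : tadj u v.
      case: Hadj => He; [ case: (m_edges M He) => _ _ /(_ Hu5 Hv) H; by rewrite /tadj H
                        | case: (m_edges M He) => _ _ /(_ Hv Hu5) H; by rewrite /tadj H orbT].
    have := Hall u; rewrite mem_iota add0n Hu5 => /(_ isT) /implyP /(_ Ht).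
    by rewrite (m_col M Hu5) => /eqP.
  + move=> Hcu; move/negP: Hf; apply; apply/(m_forb M c Hv).
    by exists u; split.
Qed.

Lemma stuck_sound a s : models a s -> astuck a -> stuck 2 s.
Proof.
move=> M /hasP [v]; rewrite mem_iota add0n => /andP [_ Hv].
case/andP => /andP [/eqP Hn H0] H1.
exists v; split; first by apply: leq_trans Hv (m_nv M).
split; first by rewrite (m_col M Hv).
move=> c Hc /(legal_iff c M Hv); rewrite Hc /=.
by case: c Hc => [|[|//]] _; [rewrite (negbTE H0) | rewrite (negbTE H1)].
Qed.

Lemma allc_sound a s : models a s -> ~~ aallc a -> ~ all_colored s.
Proof.
move=> M /allPn [v]; rewrite mem_iota add0n => /andP [_ Hv] /negPn /eqP Hn Hall.
apply: (Hall v); first by apply: leq_trans Hv (m_nv M).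
by rewrite (m_col M Hv).
Qed.

Lemma aset_models a s v c : models a s -> v < 5 ->
  models (aset a v c) (color_vertex s v c).
Proof.
move=> M Hv; split => //=.
- exact: (m_nv M).
- exact: (m_tree M).
- exact: (m_edges M).
- move=> u Hu Hun; case: ifP => [/eqP E|_]; first by [].
  exact: (m_leafcol M Hu Hun).
- move=> w Hw; case: ifP => // _; exact: (m_col M Hw).
- move=> w d Hw; rewrite (m_forb M d Hw); split.
  + move=> [u [H1 H2 H3 H4]]; exists u; split => //.
    by case: ifP => [/eqP E|]; [move: H1; rewrite E leqNgt Hv | ].
  + move=> [u [H1 H2 H3]]; case: ifP => [/eqP E|_ H4]; first by move: H1; rewrite E leqNgt Hv.
    by exists u; split.
Qed.

Lemma leaf_models a s u c : models a s -> u < nv s ->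
  models (if u < 5 then aforbset a u c else a) (add_leaf s u c).
Proof.
move=> M Hu.
have Hadj : forall x v, adj (add_leaf s u c) x v <->
   ((x == nv s) && (v == u)) \/ ((v == nv s) && (x == u)) \/ adj s x v.
  move=> x v; rewrite /adj /= !in_cons !xpair_eqE; split.
  - by case=> /orP [-> | H]; [left|right;right;left|right;left|right;right;right].
  - by case=> [->|[->|[H|H]]]; [left|right|left; rewrite H orbT|right; rewrite H orbT].
have Hcol : forall v, v < nv s -> col (add_leaf s u c) v = col s v.
  by move=> v Hvn /=; case: eqP => // E; move: Hvn; rewrite E ltnn.
have Hc5 : forall v, v < 5 -> col s v = acol (if u < 5 then aforbset a u c else a) v.
  by move=> v Hv; case: (u < 5); exact: (m_col M Hv).
split => /=.
- exact: leq_trans (m_nv M) (leqnSn _).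
- by move=> e He; rewrite in_cons (m_tree M He) orbT.
- move=> x y; rewrite in_cons xpair_eqE => /orP [/andP [/eqP -> /eqP ->] | He].
  + by split => //; [exact: ltnW | move=> H; move: (m_nv M); rewrite leqNgt H].
  + by case: (m_edges M He) => H1 H2 H3; split => //; apply: ltnW.
- move=> v H5 Hvn; case: eqP => // Hne; apply: (m_leafcol M H5); by rewrite ltn_neqAle -ltnS Hvn andbT; apply/eqP.
- move=> v Hv; rewrite -Hc5 //; exact: Hcol (leq_trans Hv (m_nv M)).
- move=> v d Hv.
  have Hvn : v < nv s by apply: leq_trans Hv (m_nv M).
  have Hvne : (v == nv s) = false by apply/negbTE; rewrite neq_ltn Hvn.
  have base : (exists x, [/\ 5 <= x, x < (nv s).+1, adj (add_leaf s u c) x v &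
               col (add_leaf s u c) x = Some d]) <->
              ((v == u) && (d == c)) \/ aforb a v d.
    rewrite (m_forb M d Hv); split.
    + move=> [x [H1 H2 /Hadj H3 H4]].
      case: H3 => [/andP [/eqP Ex /eqP Ev] | [/andP [Ev _] | H3]].
      * by left; move: H4; rewrite /= Ex eqxx Ev => -[->]; rewrite !eqxx.
      * by rewrite Hvne in Ev.
      * right; move: H4 => /=; case: eqP => [Ex|Ex H4].
          by case: H3 => /(m_edges M) [H5 H6 _]; [move: H5 | move: H6]; rewrite Ex ltnn.
        exists x; split => //; rewrite ltnS leq_eqVlt in H2.
        by case/orP: H2 => // /eqP.
    + case=> [/andP [/eqP Ev /eqP Ed] | [x [H1 H2 H3 H4]]].
      * exists (nv s); split => //; first exact: (m_nv M).
        - by apply/Hadj; left; rewrite eqxx Ev eqxx.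
        - by rewrite /= eqxx Ed.
      * exists x; split => //; first exact: ltnW.
        - by apply/Hadj; right; right.
        - by rewrite Hcol.
  rewrite base; case: ifP => Hu5 /=.
  + case: ((v == u) && (d == c)) => /=; split => //; [by left | by right | by case].
  + split; first by right.
    case=> // /andP [/eqP E _]; by move: Hu5; rewrite -E Hv.
Qed.

Lemma all_flat_map (T : Type) (P : pred T) (g : nat -> seq T) (l : seq nat) :
  all P (flatten (map g l)) -> forall x, x \in l -> all P (g x).
Proof.
elim: l => [//|y l IH] /=; rewrite all_cat => /andP [H1 H2] x.
by rewrite in_cons => /orP [/eqP -> // | /(IH H2)].
Qed.

Lemma amoves_sound a s s' (P : pred astate) : models a s -> alice_move 2 s s' ->
  all P (amoves a) -> exists a', P a' /\ models a' s'.
Proof.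
move=> M Hm; rewrite /amoves -cat1s all_cat => /andP [Pa Hf]; move: Pa; rewrite /all andbT => Pa; case: Hm.
- move=> v c L.
  have Hv := legal_small M L.
  move/(legal_iff c M Hv): (L) => /andP [Hc La].
  exists (aset a v c); split; last exact: aset_models.
  have := all_flat_map Hf (x := v); rewrite mem_iota Hv => /(_ isT).
  rewrite all_cat => /andP [_]; rewrite all_map all_filter => /allP /(_ c).
  by rewrite mem_iota Hc => /(_ isT) /implyP /(_ La).
- move=> u c Hu Hc; have := leaf_models c M Hu.
  case: ifP => Hu5 Hm; [exists (aforbset a u c) | exists a]; split => //.
  have := all_flat_map Hf (x := u); rewrite mem_iota Hu5 => /(_ isT).
  rewrite all_cat => /andP [+ _]; rewrite all_map => /allP /(_ c).
  by rewrite mem_iota Hc; apply.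
- exists a; split; [exact: Pa | exact: M].
Qed.

Lemma soundness n : forall a s, models a s -> awinA n a -> bob_wins_A 2 s.
Proof.
elim: n => [//|n IH] a s M; rewrite awinA_S.
case/orP => [St | /andP [NA Hall]]; first by apply: BWA_stuck; exact: stuck_sound St.
apply: BWA_move; first exact: allc_sound NA.
move=> s' Hm; have [a' [Ha' M']] := amoves_sound M Hm Hall.
move: Ha'; rewrite /bstep lhasE.
case: ifP => [St _ | _]; first by apply: BWB_stuck; exact: stuck_sound St.
case: ifP => // NA' /hasP [[v c]] /allpairsP [[v' c'] []].
rewrite !mem_iota !add0n => /andP [_ Hv] /andP [_ Hc] [-> ->].
case: ifP => // La W.
apply: (BWB_move (s' := color_vertex s' v' c')); first exact: allc_sound M' (negbT NA').
  by apply: BM_color; apply/(legal_iff c' M' Hv); rewrite Hc.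
exact: IH (aset_models c' M' Hv) W.
Qed.

Definition a0 := AS (fun _ => None) (fun _ _ => false).

Lemma a0_models : models a0 P4plus.
Proof.
split => //=.
- move=> x y; rewrite !in_cons !xpair_eqE in_nil.
  by case/orP=> [/andP[/eqP-> /eqP->]|/orP[/andP[/eqP-> /eqP->]|/orP[/andP[/eqP-> /eqP->]|/orP[/andP[/eqP-> /eqP->]|//]]]].
- move=> u H1 H2; move: H1; by rewrite leqNgt H2.
- move=> v c _; split => // [[u [H1 H2 _ _]]]; move: H1; by rewrite leqNgt H2.
Qed.

Theorem lemma4p2 : bob_wins_ECG 2 P4plus.
Proof.
apply: (soundness (n := 7) a0_models).
by vm_compute.
Qed.
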